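(* Let $(\mu_0^3,\cdot,[-,-])$ be a transposed Poisson algebra structure on the associative algebra $\mu_0^3$. Then it is isomorphic to one of the following pairwise non-isomorphic algebras: $\mathbf{TP}(1,0)$, or $\mathbf{TP}(0,\alpha)$ with $\alpha\in\mathbb{C}$.
   Context: $\mu_0^3$ is the complex commutative associative algebra with basis $\{e_1,e_2,e_3\}$ and $e_1\cdot e_1=e_2$, $e_1\cdot e_2=e_2\cdot e_1=e_3$, other products zero. A transposed Poisson algebra is a triple $(\mathfrak{L},\cdot,[-,-])$ with $(\mathfrak{L},\cdot)$ commutative associative, $(\mathfrak{L},[-,-])$ a Lie algebra, and $2z\cdot[x,y]=[z\cdot x,y]+[x,z\cdot y]$ for all $x,y,z$. For $\alpha_2,\alpha_3\in\mathbb{C}$, $\mathbf{TP}(\alpha_2,\alpha_3)$ denotes $\mu_0^3$ with the bracket $[e_i,e_j]=(j-i)\sum_{t=i+j-1}^{3}\alpha_{t-i-j+3}e_t$ for $3\leq i+j\leq 4$, all other brackets of basis elements zero. Isomorphisms preserve both operations. *)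

(* Defs.v *)
(* The complex field C is modelled as R[i] = complex R for an
   arbitrary R : realType (the real numbers); the 3-dim space is 'rV[C]_3,
   basis e_1,e_2,e_3 = delta rows 0,1,2. *)
From HB Require Import structures.
From mathcomp Require Import all_boot all_order all_algebra.
From mathcomp Require Import complex.
From mathcomp Require Import reals.
Set Implicit Arguments. Unset Strict Implicit. Unset Printing Implicit Defensive.
Import Order.TTheory GRing.Theory Num.Theory.
Local Open Scope ring_scope.

Section Defs.
Variable C : fieldType.
Notation V := 'rV[C]_3.

Definition e1 : V := delta_mx 0 (@Ordinal 3 0 isT).
Definition e2 : V := delta_mx 0 (@Ordinal 3 1 isT).
Definition e3 : V := delta_mx 0 (@Ordinal 3 2 isT).
Definition co (x : V) (k : nat) (Hk : (k < 3)%N) : C := x 0 (Ordinal Hk).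
Definition x1 (x : V) := co x (isT : (0 < 3)%N).
Definition x2 (x : V) := co x (isT : (1 < 3)%N).
Definition x3 (x : V) := co x (isT : (2 < 3)%N).

(* product of mu_0^3, extended bilinearly from e1e1=e2, e1e2=e2e1=e3 *)
Definition mu (x y : V) : V :=
  (x1 x * x1 y) *: e2 + (x1 x * x2 y + x2 x * x1 y) *: e3.

(* bracket of TP(a2,a3): [e1,e2] = a2 e2 + a3 e3, [e1,e3] = 2 a2 e3,
   [e_j,e_i] = -[e_i,e_j], all others zero. *)
Definition TPbr (a2 a3 : C) (x y : V) : V :=
  (x1 x * x2 y - x2 x * x1 y) *: (a2 *: e2 + a3 *: e3)
  + (x1 x * x3 y - x3 x * x1 y) *: ((2%:R * a2) *: e3).

Definition is_bilinear (br : V -> V -> V) : Prop :=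
  (forall (a : C) x y z, br (a *: x + y) z = a *: br x z + br y z) /\
  (forall (a : C) x y z, br z (a *: x + y) = a *: br z x + br z y).

Definition is_Lie (br : V -> V -> V) : Prop :=
  is_bilinear br /\ (forall x, br x x = 0) /\
  (forall x y z, br x (br y z) + br y (br z x) + br z (br x y) = 0).

Definition is_TP (br : V -> V -> V) : Prop :=
  is_Lie br /\
  (forall x y z, 2%:R *: mu z (br x y) = br (mu z x) y + br x (mu z y)).

Definition TP_iso (br1 br2 : V -> V -> V) : Prop :=
  exists f : V -> V,
    (forall (a : C) x y, f (a *: x + y) = a *: f x + f y) /\ bijective f /\
    (forall x y, f (mu x y) = mu (f x) (f y)) /\
    (forall x y, f (br1 x y) = br2 (f x) (f y)).
End Defs.

(* Main.v *)
Require Import Defs.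
From HB Require Import structures.
From mathcomp Require Import all_boot all_order all_algebra.
From mathcomp Require Import complex.
From mathcomp Require Import reals.
From mathcomp Require Import ring.
Import Order.TTheory GRing.Theory Num.Theory.
Local Open Scope ring_scope.

Section H.
Variable C : fieldType.
Notation V := 'rV[C]_3.
Local Notation e1 := (e1 C). Local Notation e2 := (e2 C). Local Notation e3 := (e3 C).

Lemma coD (u v : V) k (Hk : (k < 3)%N) : co (u + v) Hk = co u Hk + co v Hk.
Proof. by rewrite /co mxE. Qed.
Lemma coZ a (u : V) k (Hk : (k < 3)%N) : co (a *: u) Hk = a * co u Hk.
Proof. by rewrite /co mxE. Qed.
Lemma coN (u : V) k (Hk : (k < 3)%N) : co (- u) Hk = - co u Hk.
Proof. by rewrite /co mxE. Qed.
Lemma co0 k (Hk : (k < 3)%N) : co (0 : V) Hk = 0.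
Proof. by rewrite /co mxE. Qed.
Lemma coe1 k (Hk : (k < 3)%N) : co e1 Hk = (k == 0)%:R.
Proof. by rewrite /co /Defs.e1 mxE. Qed.
Lemma coe2 k (Hk : (k < 3)%N) : co e2 Hk = (k == 1)%:R.
Proof. by rewrite /co /Defs.e2 mxE. Qed.
Lemma coe3 k (Hk : (k < 3)%N) : co e3 Hk = (k == 2)%:R.
Proof. by rewrite /co /Defs.e3 mxE. Qed.

Lemma vec_eq (u v : V) : x1 u = x1 v -> x2 u = x2 v -> x3 u = x3 v -> u = v.
Proof.
move=> h1 h2 h3; apply/matrixP => i j; rewrite (ord1 i).
case: j => -[|[|[|k]]] Hk //.
- by move: h1; rewrite /x1 /co (bool_irrelevance Hk isT).
- by move: h2; rewrite /x2 /co (bool_irrelevance Hk isT).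
- by move: h3; rewrite /x3 /co (bool_irrelevance Hk isT).
Qed.

Definition coE := (coD, coZ, coN, co0, coe1, coe2, coe3).

Lemma vecE (x : V) : x = x1 x *: e1 + x2 x *: e2 + x3 x *: e3.
Proof. apply: vec_eq; rewrite /x1 /x2 /x3 !coE /=; ring. Qed.

Ltac vc := apply: vec_eq; rewrite /mu /TPbr /x1 /x2 /x3 ?coE /=; ring.

Lemma TPbr_TP (a2 a3 : C) : is_TP (TPbr a2 a3).
Proof.
split; [split; [split|split]|].
- by move=> a x y z; vc.
- by move=> a x y z; vc.
- by move=> x; vc.
- by move=> x y z; vc.
- by move=> x y z; vc.
Qed.

Section Br.
Variable br : V -> V -> V.
Hypothesis Hbil : is_bilinear br.
Hypothesis Halt : forall x, br x x = 0.

Lemma br0l y : br 0 y = 0.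
Proof.
have := (Hbil.1 1 0 0 y); rewrite scaler0 addr0 scale1r => /(congr1 (fun t => t - br 0 y)).
by rewrite subrr addrK => <-.
Qed.
Lemma br0r y : br y 0 = 0.
Proof.
have := (Hbil.2 1 0 0 y); rewrite scaler0 addr0 scale1r => /(congr1 (fun t => t - br y 0)).
by rewrite subrr addrK => <-.
Qed.
Lemma brDl x y z : br (x + y) z = br x z + br y z.
Proof. by have := Hbil.1 1 x y z; rewrite !scale1r. Qed.
Lemma brDr x y z : br z (x + y) = br z x + br z y.
Proof. by have := Hbil.2 1 x y z; rewrite !scale1r. Qed.
Lemma brZl a x z : br (a *: x) z = a *: br x z.
Proof. by have := Hbil.1 a x 0 z; rewrite !addr0 br0l addr0. Qed.
Lemma brZr a x z : br z (a *: x) = a *: br z x.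
Proof. by have := Hbil.2 a x 0 z; rewrite !addr0 br0r addr0. Qed.
Lemma brC x y : br y x = - br x y.
Proof.
have := Halt (x + y); rewrite brDl !brDr !Halt add0r addr0.
by move/eqP; rewrite addrC addr_eq0 => /eqP.
Qed.

Lemma br_expand x y : br x y =
  (x1 x * x2 y - x2 x * x1 y) *: br e1 e2 + (x1 x * x3 y - x3 x * x1 y) *: br e1 e3
  + (x2 x * x3 y - x3 x * x2 y) *: br e2 e3.
Proof.
rewrite {1}(vecE x) {1}(vecE y).
rewrite !brDl !brDr !brZl !brZr !Halt (brC e1 e2) (brC e1 e3) (brC e2 e3).
set p := br e1 e2; set q := br e1 e3; set r := br e2 e3.
vc.
Qed.
End Br.

Lemma lin1 (a b c d k : C) : a = b -> c - d = k * (a - b) -> c = d.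
Proof. by move=> -> /eqP; rewrite subrr mulr0 subr_eq0 => /eqP. Qed.
Lemma lin3 (a b a' b' a'' b'' c d k k' k'' : C) : a = b -> a' = b' -> a'' = b'' ->
   c - d = k * (a - b) + k' * (a' - b') + k'' * (a'' - b'') -> c = d.
Proof. by move=> -> -> -> /eqP; rewrite !subrr !mulr0 !addr0 subr_eq0 => /eqP. Qed.

Lemma mu11 : mu e1 e1 = e2. Proof. vc. Qed.
Lemma mu12 : mu e1 e2 = e3. Proof. vc. Qed.
Lemma mu21 : mu e2 e1 = e3. Proof. vc. Qed.
Lemma mu22 : mu e2 e2 = 0. Proof. vc. Qed.
Lemma mu13 : mu e1 e3 = 0. Proof. vc. Qed.

Lemma classify (br : V -> V -> V) : (6%:R : C) != 0 -> is_TP br ->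
  forall x y, br x y = TPbr (x2 (br e1 e2)) (x3 (br e1 e2)) x y.
Proof.
move=> H6 [[Hbil [Halt _]] HT].
have E := @br_expand br Hbil Halt.
have A := HT e1 e2 e2; have Cc := HT e1 e2 e1; have D := HT e1 e3 e1.
rewrite mu11 mu12 mu21 mu22 mu13 (br0r br Hbil) (brC br Hbil Halt e2 e3) ?Halt in A Cc D.
move: A Cc D (E).
move: (br e1 e2) (br e1 e3) (br e2 e3) => p q r A Cc D E'.
have A1 := congr1 (@x1 C) A; have A2 := congr1 (@x2 C) A; have A3 := congr1 (@x3 C) A.
have C1 := congr1 (@x1 C) Cc; have C2 := congr1 (@x2 C) Cc; have C3 := congr1 (@x3 C) Cc.
have D1 := congr1 (@x1 C) D; have D2 := congr1 (@x2 C) D; have D3 := congr1 (@x3 C) D.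
move: A1 A2 A3 C1 C2 C3 D1 D2 D3.
rewrite /mu /x1 /x2 /x3 !coE /= => A1 A2 A3 C1 C2 C3 D1 D2 D3.
have R1 : co r (isT : (0 < 3)%N) = 0 by apply: (@lin1 _ _ _ _ (1) A1); ring.
have R2 : co r (isT : (1 < 3)%N) = 0 by apply: (@lin1 _ _ _ _ (1) A2); ring.
have Q1 : co q (isT : (0 < 3)%N) = 0 by apply: (@lin1 _ _ _ _ (-1) C1); ring.
have P6 : 6%:R * co p (isT : (0 < 3)%N) = 0 by apply: (@lin3 _ _ _ _ _ _ _ _ 1 1 2 A3 D3 C2); ring.
have P1 : co p (isT : (0 < 3)%N) = 0.
  by move/eqP: P6; rewrite mulf_eq0 (negbTE H6) /= => /eqP.
have Q2 : co q (isT : (1 < 3)%N) = 0 by apply: (@lin1 _ _ _ _ (-1) C2); rewrite P1; ring.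
have R3 : co r (isT : (2 < 3)%N) = 0 by apply: (@lin1 _ _ _ _ (-1) D3); rewrite Q2; ring.
have Q3 : co q (isT : (2 < 3)%N) = 2 * co p (isT : (1 < 3)%N) by apply: (@lin1 _ _ _ _ (-1) C3); ring.
move=> x y; rewrite E'.
apply: vec_eq; rewrite /mu /TPbr /x1 /x2 /x3 !coE /= ?P1 ?Q1 ?Q2 ?Q3 ?R1 ?R2 ?R3; ring.
Qed.

Definition F (a b : C) (x : V) : V :=
  x1 x *: (a *: e1 + b *: e2) + x2 x *: (a ^+ 2 *: e2 + (2%:R * a * b) *: e3)
  + x3 x *: (a ^+ 3 *: e3).
Definition G (a b : C) (x : V) : V :=
  (x1 x / a) *: e1 + ((x2 x - b * (x1 x / a)) / a ^+ 2) *: e2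
  + ((x3 x - 2%:R * a * b * ((x2 x - b * (x1 x / a)) / a ^+ 2)) / a ^+ 3) *: e3.

Lemma iso_main (br : V -> V -> V) (a2 a3 : C) : a2 != 0 -> (2%:R : C) != 0 ->
  (forall x y, br x y = TPbr a2 a3 x y) -> TP_iso br (TPbr 1 0).
Proof.
move=> Ha H2 E; exists (F a2 (a2 * a3 / 2%:R)); split; [|split; [|split]].
- by move=> a x y; apply: vec_eq; rewrite /F /x1 /x2 /x3 ?coE /=; ring.
- exists (G a2 (a2 * a3 / 2%:R)) => x;
    apply: vec_eq; rewrite /F /G /x1 /x2 /x3 ?coE /=; field; by rewrite ?expf_neq0 ?Ha ?H2.
- by move=> x y; apply: vec_eq; rewrite /F /mu /x1 /x2 /x3 ?coE /=; ring.
- move=> x y; rewrite E.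
  by apply: vec_eq; rewrite /F /TPbr /x1 /x2 /x3 ?coE /=; field.
Qed.

Lemma iso_id (br : V -> V -> V) (a3 : C) :
  (forall x y, br x y = TPbr 0 a3 x y) -> TP_iso br (TPbr 0 a3).
Proof.
move=> E; exists id; split; [|split; [|split]] => //.
by exists id.
Qed.

Lemma auto_facts (f : V -> V) :
  (forall (a : C) x y, f (a *: x + y) = a *: f x + f y) -> bijective f ->
  (forall x y, f (mu x y) = mu (f x) (f y)) ->
  [/\ x1 (f e1) != 0, f 0 = 0, f e2 = mu (f e1) (f e1) &
      f e3 = mu (f e1) (mu (f e1) (f e1))].
Proof.
move=> Hl Hb Hm.
have f0 : f 0 = 0.
  have := Hl 1 0 0; rewrite scaler0 addr0 scale1r => /(congr1 (fun t => t - f 0)).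
  by rewrite subrr addrK => <-.
have fe2 : f e2 = mu (f e1) (f e1) by rewrite -mu11 Hm.
have fe3 : f e3 = mu (f e1) (mu (f e1) (f e1)) by rewrite -mu12 Hm fe2.
split => //.
apply/negP => /eqP H0.
have : f e3 = f 0.
  rewrite fe3 f0; apply: vec_eq; rewrite /mu /x1 /x2 /x3 ?coE /=; move: H0; rewrite /x1 => H0; rewrite ?H0; ring.
move/(bij_inj Hb)/(congr1 (@x3 C)); rewrite /x3 !coE /=.
by move/eqP; rewrite oner_eq0.
Qed.
Lemma noiso (al : C) : ~ TP_iso (TPbr 1 0) (TPbr 0 al).
Proof.
move=> [f [Hl [Hb [Hm Hbr]]]].
have [Hn f0 fe2 fe3] := @auto_facts f Hl Hb Hm.
have := Hbr e1 e2.
have -> : TPbr 1 0 e1 e2 = e2 by vc.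
rewrite fe2 => /(congr1 (@x2 C)); rewrite /mu /TPbr /x1 /x2 /x3 !coE /=.
move: Hn; rewrite /x1. set a := co (f e1) _. move=> Hn Heq.
have : a * a = 0 by apply: (@lin1 _ _ _ _ 1 Heq); ring.
by move/eqP; rewrite mulf_eq0 (negbTE Hn).
Qed.

Lemma iso_eq (al be : C) : TP_iso (TPbr 0 al) (TPbr 0 be) -> al = be.
Proof.
move=> [f [Hl [Hb [Hm Hbr]]]].
have [Hn f0 fe2 fe3] := @auto_facts f Hl Hb Hm.
have := Hbr e1 e2.
have -> : TPbr 0 al e1 e2 = al *: e3 + 0 by vc.
rewrite Hl f0 addr0 fe2 fe3 => /(congr1 (@x3 C)); rewrite /mu /TPbr /x1 /x2 /x3 !coE /=.
move: Hn; rewrite /x1. set a := co (f e1) _. move=> Hn Heq.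
have : (al - be) * (a * a * a) = 0 by apply: (@lin1 _ _ _ _ 1 Heq); ring.
move/eqP; rewrite mulf_eq0 !mulf_eq0 (negbTE Hn) /= orbF subr_eq0.
by move/eqP.
Qed.
End H.

Theorem mainTheorem3 (R : realType) :
  (* the listed algebras are transposed Poisson structures on mu_0^3 *)
  (is_TP (TPbr (1 : R[i]) 0) /\ forall al : R[i], is_TP (TPbr 0 al)) /\
  (* every transposed Poisson structure is isomorphic to one of them *)
  (forall br : 'rV[R[i]]_3 -> 'rV[R[i]]_3 -> 'rV[R[i]]_3, is_TP br ->
     TP_iso br (TPbr 1 0) \/ exists al : R[i], TP_iso br (TPbr 0 al)) /\
  (* and they are pairwise non-isomorphic *)
  (forall al : R[i], ~ TP_iso (TPbr 1 0) (TPbr 0 al)) /\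
  (forall al be : R[i], TP_iso (TPbr 0 al) (TPbr 0 be) -> al = be).
Proof.
have H2 : (2%:R : R[i]) != 0 by rewrite pnatr_eq0.
have H6 : (6%:R : R[i]) != 0 by rewrite pnatr_eq0.
split; first by split => [|al]; apply: TPbr_TP.
split.
  move=> br Hbr; have E := @classify _ br H6 Hbr.
  case: (eqVneq (x2 (br (e1 _) (e2 _))) 0) => [h0|hn].
    right; exists (x3 (br (e1 _) (e2 _))); apply: iso_id => x y.
    by rewrite E h0.
  by left; apply: (@iso_main _ br _ _ hn H2 E).
split; [exact: (@noiso _) | exact: (@iso_eq _)].
Qed.
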